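(* For all positive integers $n$: $|X_n|<\frac{C_1}{\lambda^{n/2}}$, $|Y_n|<\frac{C_1}{\lambda^{n/2}}$, $|Z_n|<\frac{2|\theta|}{\sqrt{3\theta^2-4p}}\cdot\frac{1}{\lambda^{n/2}}\le\frac{\sqrt2 C_1}{\lambda^{n/2}}$, and $|\lambda^n-(3\theta^2-p)c_n|<\frac{(1+\sqrt2)C_1}{\lambda^{n/2}}$.
   Context: Standing setup: $p,q\in\mathbb{Z}$ are such that $x^3-px-q$ is irreducible over $\mathbb{Q}$ with exactly one real root $\theta$ (one has $3\theta^2-4p>0$ and $3\theta^2-p>0$). $K=\mathbb{Q}(\theta)\subset\mathbb{R}$, $\mathcal{O}_K$ its ring of integers. $d$ is a positive integer with $\mathcal{O}_K\subseteq\frac1d\mathbb{Z}[\theta]$. $\lambda\in\mathcal{O}_K$ is a unit with $\lambda>1$. For $n\ge1$ the rationals $a_n,b_n,c_n$ are defined by $a_n+b_n\theta+c_n\theta^2=\lambda^n$, and $X_n=a_n+pc_n-b_n\theta$, $Y_n=a_n+pc_n-c_n\theta^2$, $Z_n=b_n\theta-c_n\theta^2$, $k_n=dc_n$. Constants: $C_1=\max\{\sqrt2,\ \frac{\sqrt2|\theta|}{\sqrt{3\theta^2-4p}}\}$, $C_2=\frac{\sqrt d}{\sqrt{3\theta^2-p}}$. *)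

(* Defs.v *)
(* the real numbers are an arbitrary real closed field R. *)
From HB Require Import structures.
From mathcomp Require Import all_boot all_order all_algebra.
Set Implicit Arguments. Unset Strict Implicit. Unset Printing Implicit Defensive.
Import Order.TTheory GRing.Theory Num.Theory.
Local Open Scope ring_scope.

Definition cubicQ (p q : int) : {poly rat} :=
  'X^3 - (p%:~R) *: 'X - (q%:~R)%:P.

(* x lies in K = Q(theta) (theta algebraic, so Q(theta) = Q[theta]). *)
Definition inK (R : fieldType) (theta x : R) : Prop :=
  exists f : {poly rat}, x = (map_poly ratr f).[theta].

Definition alg_integer (R : fieldType) (x : R) : Prop :=
  exists P : {poly int}, P \is monic /\ root (map_poly intr P) x.

Definition inOK (R : fieldType) (theta x : R) : Prop :=
  inK theta x /\ alg_integer x.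

Definition unitOK (R : fieldType) (theta x : R) : Prop :=
  inOK theta x /\ inOK theta x^-1.

Definition Xn (R : fieldType) (p : int) (theta : R) (a b c : rat) : R :=
  ratr a + p%:~R * ratr c - ratr b * theta.
Definition Yn (R : fieldType) (p : int) (theta : R) (a b c : rat) : R :=
  ratr a + p%:~R * ratr c - ratr c * theta ^+ 2.
Definition Zn (R : fieldType) (theta : R) (b c : rat) : R :=
  ratr b * theta - ratr c * theta ^+ 2.

Definition C1 (R : rcfType) (p : int) (theta : R) : R :=
  Num.max (Num.sqrt 2)
          (Num.sqrt 2 * `|theta| / Num.sqrt (3 * theta ^+ 2 - 4 * p%:~R)).

(* Main.v *)
Require Import Defs.
From HB Require Import structures.
From mathcomp Require Import all_boot all_order all_algebra.
From mathcomp Require Import ring lra zify.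
Import Order.TTheory GRing.Theory Num.Theory.
Local Open Scope ring_scope.
Lemma size_cubic (p q : int) : size (cubicQ p q) = 4%N.
Proof.
rewrite /cubicQ -addrA size_addl ?size_polyXn //.
apply: (leq_ltn_trans (size_add _ _)).
rewrite gtn_max !size_opp.
by rewrite (leq_ltn_trans (size_scale_leq _ _)) ?size_polyX // (leq_ltn_trans (size_polyC_leq1 _)).
Qed.

Lemma LIlem (R : rcfType) (p q : int) (th : R) :
  irreducible_poly (cubicQ p q) -> root (map_poly ratr (cubicQ p q)) th ->
  forall al be ga : rat, ratr al + ratr be * th + ratr ga * th ^+ 2 = 0 ->
  [/\ al = 0, be = 0 & ga = 0].
Proof.
move=> Hirr Hr al be ga H.
pose g : {poly rat} := al%:P + be *: 'X + ga *: 'X^2.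
have gth : (map_poly ratr g).[th] = 0.
  rewrite /g !rmorphD /= map_polyC !map_polyZ /= map_polyX map_polyXn !hornerE.
  by rewrite -H /= -mulrA -expr2.
suff g0 : g = 0.
  have := congr1 (fun f : {poly rat} => (f`_0, f`_1, f`_2)) g0.
  rewrite /g !coefE /= !mulr0 !mulr1 !addr0 !add0r.
  by case=> -> -> ->.
apply/eqP; apply/negPn/negP => gn0.
pose h := gcdp (cubicQ p q) g.
have hth : root (map_poly ratr h) th by rewrite /h gcdp_map root_gcd Hr /root gth eqxx.
have [hs1|hs1] := eqVneq (size h) 1%N.
  move/eqP: hs1 => /size_poly1P [c cn0 hc].
  move: hth; rewrite hc map_polyC /root hornerC fmorph_eq0.
  by rewrite (negPf cn0).
have heq := Hirr.2 h hs1 (dvdp_gcdl _ _).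
have Cg : cubicQ p q %| g by rewrite -(eqp_dvdl _ heq) dvdp_gcdr.
have := dvdp_leq gn0 Cg; rewrite size_cubic.
have : (size g <= 3)%N.
  rewrite /g; apply: (leq_trans (size_add _ _)); rewrite geq_max.
  rewrite (leq_trans (size_scale_leq _ _)) ?size_polyXn // andbT.
  apply: (leq_trans (size_add _ _)); rewrite geq_max.
  rewrite (leq_trans (size_polyC_leq1 _)) //.
  by rewrite (leq_trans (size_scale_leq _ _)) ?size_polyX.
by move=> H1 H2; have := leq_trans H2 H1.
Qed.

Set Implicit Arguments. Unset Strict Implicit.

Section T.
Variable T : comNzRingType.
Variables (P Q : T).
Definition tA (a1 b1 c1 a2 b2 c2 : T) := a1 * a2 + Q * (b1 * c2 + c1 * b2).
Definition tB (a1 b1 c1 a2 b2 c2 : T) := a1 * b2 + b1 * a2 + P * (b1 * c2 + c1 * b2) + Q * c1 * c2.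
Definition tC (a1 b1 c1 a2 b2 c2 : T) := a1 * c2 + b1 * b2 + c1 * a2 + P * c1 * c2.
Definition Nt (a b c : T) :=
  a * ((a + c * P) ^+ 2 - b * (b * P + c * Q)) - c * Q * (b * (a + c * P) - c * (b * P + c * Q)) + b * Q * (b ^+ 2 - c * (a + c * P)).
Lemma Nt_mul a1 b1 c1 a2 b2 c2 : Nt (tA a1 b1 c1 a2 b2 c2) (tB a1 b1 c1 a2 b2 c2) (tC a1 b1 c1 a2 b2 c2) = Nt a1 b1 c1 * Nt a2 b2 c2.
Proof. rewrite /Nt /tA /tB /tC. ring. Qed.
Lemma Nt_scale D a b c : Nt (D * a) (D * b) (D * c) = D ^+ 3 * Nt a b c.
Proof. rewrite /Nt. ring. Qed.
Lemma Nt_one : Nt 1 0 0 = 1.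
Proof. rewrite /Nt. ring. Qed.
End T.

Lemma Nt_morph (A B : comNzRingType) (f : {rmorphism A -> B}) P Q a b c :
  f (Nt P Q a b c) = Nt (f P) (f Q) (f a) (f b) (f c).
Proof. by rewrite /Nt !(rmorphD, rmorphN, rmorphB, rmorphM, rmorphXn). Qed.

Section RR.
Variable R : rcfType.
Variables (p th : R).
Definition uu (a b c : R) := a + p * c - b * th / 2 - c * th ^+ 2 / 2.
Definition vv (a b c : R) := (b - c * th) / 2.
Definition DD := 3 * th ^+ 2 - 4 * p.
Let q := th ^+ 3 - p * th.
Lemma uu_mul a1 b1 c1 a2 b2 c2 :
  uu (tA q a1 b1 c1 a2 b2 c2) (tB p q a1 b1 c1 a2 b2 c2) (tC p a1 b1 c1 a2 b2 c2)
  = uu a1 b1 c1 * uu a2 b2 c2 - DD * vv a1 b1 c1 * vv a2 b2 c2.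
Proof. rewrite /uu /vv /DD /tA /tB /tC /q. field; rewrite ?pnatr_eq0 //. Qed.
Lemma vv_mul a1 b1 c1 a2 b2 c2 :
  vv (tA q a1 b1 c1 a2 b2 c2) (tB p q a1 b1 c1 a2 b2 c2) (tC p a1 b1 c1 a2 b2 c2)
  = uu a1 b1 c1 * vv a2 b2 c2 + vv a1 b1 c1 * uu a2 b2 c2.
Proof. rewrite /uu /vv /DD /tA /tB /tC /q. field; rewrite ?pnatr_eq0 //. Qed.
Lemma NM a b c : (a + b * th + c * th ^+ 2) * (uu a b c ^+ 2 + DD * vv a b c ^+ 2) = Nt p q a b c.
Proof. rewrite /uu /vv /DD /Nt /q. field; rewrite ?pnatr_eq0 //. Qed.
End RR.

Definition trip := (rat * rat * rat)%type.
Definition tmul (P Q : rat) (t s : trip) : trip :=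
  (tA Q t.1.1 t.1.2 t.2 s.1.1 s.1.2 s.2, tB P Q t.1.1 t.1.2 t.2 s.1.1 s.1.2 s.2,
   tC P t.1.1 t.1.2 t.2 s.1.1 s.1.2 s.2).

Lemma denoms (s : seq rat) : exists2 D : nat, (0 < D)%N &
  forall r, r \in s -> exists z : int, D%:R * r = z%:~R.
Proof.
elim: s => [|r s [D D0 H]]; first by exists 1%N.
have hd : (`|denq r|%:R : rat) = (denq r)%:~R.
  by rewrite natr_absz gtr0_norm // denq_gt0.
exists (D * `|denq r|)%N.
  by rewrite muln_gt0 D0 absz_gt0 denq_neq0.
move=> r'; rewrite inE => /orP [/eqP -> | /H [z hz]].
  exists (D%:Z * numq r); rewrite natrM hd intrM numqE; ring.
exists (z * denq r); rewrite natrM hd intrM -hz; ring.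
Qed.

Lemma rat_int_pow (r : rat) (D : nat) : (0 < D)%N ->
  (forall k, exists z : int, D%:R * r ^+ k = z%:~R) -> exists z : int, r = z%:~R.
Proof.
move=> D0 H.
have dpos : 0 < denq r := denq_gt0 r.
have key k : (`|denq r| ^ k %| D)%N.
  have [z hz] := H k.
  have E : D%:Z * numq r ^+ k = z * denq r ^+ k.
    apply: (@intr_inj rat).
    rewrite !rmorphM !rmorphXn /= numqE -hz exprMn. 
    by rewrite -mulrA.
  have := congr1 absz E; rewrite !abszM !abszX absz_nat => E'.
  have cop : coprime (`|denq r| ^ k) (`|numq r| ^ k).
    by rewrite coprimeXl // coprime_sym coprimeXl // coprime_num_den.
  rewrite -(Gauss_dvdr _ cop) mulnC E'.
  exact: dvdn_mull.
have d1 : `|denq r|%N = 1%N.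
  have le := dvdn_leq D0 (key D).
  apply/eqP; rewrite eqn_leq absz_gt0 gt_eqF // andbT leqNgt.
  apply/negP=> gt1.
  by have := ltn_expl D gt1; rewrite ltnNge le.
exists (numq r).
have d1' : denq r = 1 by move: dpos d1; case: (denq r) => // n _ /= ->.
by rewrite -[r in LHS]divq_num_den d1' divr1.
Qed.

Section Alg.
Variables (R : rcfType) (p q : int) (th : R).
Hypothesis Hq : th ^+ 3 = p%:~R * th + q%:~R.
Hypothesis HLI : forall al be ga : rat,
  ratr al + ratr be * th + ratr ga * th ^+ 2 = 0 -> [/\ al = 0, be = 0 & ga = 0].

Definition rev (t : trip) : R := ratr t.1.1 + ratr t.1.2 * th + ratr t.2 * th ^+ 2.
Definition mul t s := tmul p%:~R q%:~R t s.
Definition Nr (t : trip) : rat := Nt p%:~R q%:~R t.1.1 t.1.2 t.2.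
Definition U (t : trip) : R := uu p%:~R th (ratr t.1.1) (ratr t.1.2) (ratr t.2).
Definition V (t : trip) : R := vv th (ratr t.1.1) (ratr t.1.2) (ratr t.2).
Definition DR : R := DD p%:~R th.

Lemma qE : (q%:~R : R) = th ^+ 3 - p%:~R * th.
Proof. by rewrite Hq; ring. Qed.

Lemma rev_mul t s : rev (mul t s) = rev t * rev s.
Proof.
case: t => [[a1 b1] c1]; case: s => [[a2 b2] c2].
rewrite /rev /mul /tmul /tA /tB /tC /= !(rmorphD, rmorphM) /= !ratr_int qE.
ring.
Qed.

Lemma rev_inj t s : rev t = rev s -> t = s.
Proof.
case: t => [[a1 b1] c1]; case: s => [[a2 b2] c2] /= E.
have [] := @HLI (a1 - a2) (b1 - b2) (c1 - c2).
  rewrite !rmorphB /=.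
  transitivity (rev (a1, b1, c1) - rev (a2, b2, c2)); last by rewrite E subrr.
  rewrite /rev /=; ring.
by move=> /eqP; rewrite subr_eq0 => /eqP -> /eqP; rewrite subr_eq0 => /eqP -> /eqP; rewrite subr_eq0 => /eqP ->.
Qed.

Lemma Nr_mul t s : Nr (mul t s) = Nr t * Nr s.
Proof. by rewrite /Nr /mul /tmul /= Nt_mul. Qed.

Lemma U_mul t s : U (mul t s) = U t * U s - DR * V t * V s.
Proof.
rewrite /U /V /DR /mul /tmul /= /tA /tB /tC !(rmorphD, rmorphM) /= !ratr_int qE.
by rewrite -(uu_mul (p%:~R) th) /tA /tB /tC.
Qed.

Lemma V_mul t s : V (mul t s) = U t * V s + V t * U s.
Proof.
rewrite /U /V /DR /mul /tmul /= /tA /tB /tC !(rmorphD, rmorphM) /= !ratr_int qE.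
by rewrite -(vv_mul (p%:~R) th) /tA /tB /tC.
Qed.

Lemma NMr t : rev t * (U t ^+ 2 + DR * V t ^+ 2) = ratr (Nr t).
Proof.
rewrite /rev /U /V /DR /Nr (Nt_morph (ratr : {rmorphism rat -> R})) !rmorph_int qE.
exact: NM.
Qed.

Definition tpow (t : trip) (k : nat) : trip := iter k (mul t) (1, 0, 0).

Lemma rev_pow t k : rev (tpow t k) = rev t ^+ k.
Proof.
elim: k => [|k IH]; first by rewrite /rev /= rmorph1 !rmorph0; ring.
by rewrite /tpow iterS -/(tpow t k) rev_mul IH exprS.
Qed.

Lemma Nr_pow t k : Nr (tpow t k) = Nr t ^+ k.
Proof.
elim: k => [|k IH]; first by rewrite /Nr /= Nt_one.
by rewrite /tpow iterS -/(tpow t k) Nr_mul IH exprS.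
Qed.

Lemma inK_trip x : inK th x -> exists t, x = rev t.
Proof.
move=> [f ->]; elim/poly_ind: f => [|f c [t IH]].
  by exists (0, 0, 0); rewrite rmorph0 horner0 /rev /= !rmorph0; ring.
set m := mul t (0, 1, 0).
have Hm : rev m = rev t * th by rewrite rev_mul /rev /= rmorph0 rmorph1; ring.
exists (m.1.1 + c, m.1.2, m.2).
have E2 : rev (m.1.1 + c, m.1.2, m.2) = rev m + ratr c.
  by clear Hm; case: m => [[? ?] ?]; rewrite /rev /= rmorphD; ring.
by rewrite E2 Hm rmorphD rmorphM /= map_polyX map_polyC !hornerE IH.
Qed.



Lemma int_norm x t : alg_integer x -> x = rev t -> exists z : int, Nr t = z%:~R.
Proof.
move=> [P [Pm Pr]] xt.
set m := (size P).-1.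
have [D D0 HD] := denoms (flatten [seq [:: (tpow t j).1.1; (tpow t j).1.2; (tpow t j).2] | j <- iota 0 m]).
pose inZ (y : R) := exists a b c : int,
  D%:R * y = a%:~R + b%:~R * th + c%:~R * th ^+ 2.
have conv r z : D%:R * r = z%:~R -> D%:R * (ratr r : R) = z%:~R.
  by move=> h; rewrite -(rmorph_nat (ratr : {rmorphism rat -> R})) -rmorphM h rmorph_int.
have Zsmall j : (j < m)%N -> inZ (x ^+ j).
  move=> jm.
  have mem r : r \in [:: (tpow t j).1.1; (tpow t j).1.2; (tpow t j).2] ->
      r \in flatten [seq [:: (tpow t j).1.1; (tpow t j).1.2; (tpow t j).2] | j <- iota 0 m].
    move=> rin; apply/flattenP; exists [:: (tpow t j).1.1; (tpow t j).1.2; (tpow t j).2] => //.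
    by apply/mapP; exists j; rewrite // mem_iota.
  have [za ha] := HD _ (mem (tpow t j).1.1 ltac:(by rewrite !inE eqxx ?orbT)).
  have [zb hb] := HD _ (mem (tpow t j).1.2 ltac:(by rewrite !inE eqxx ?orbT)).
  have [zc hc] := HD _ (mem (tpow t j).2 ltac:(by rewrite !inE eqxx ?orbT)).
  exists za, zb, zc.
  rewrite xt -rev_pow /rev !mulrDr !mulrA -(conv _ _ ha) -(conv _ _ hb) -(conv _ _ hc).
  by rewrite /= !mulrA.
have Z0 : inZ 0 by exists 0, 0, 0; rewrite mulr0 !mulr0z !mul0r !addr0.
have ZD y y' : inZ y -> inZ y' -> inZ (y + y').
  move=> [a [b [c h]]] [a' [b' [c' h']]]; exists (a + a'), (b + b'), (c + c').
  by rewrite mulrDr h h' !intrD; ring.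
have ZM (z : int) y : inZ y -> inZ (z%:~R * y).
  move=> [a [b [c h]]]; exists (z * a), (z * b), (z * c).
  by rewrite mulrCA h !intrM; ring.
have ZN y : inZ y -> inZ (- y).
  move=> [a [b [c h]]]; exists (- a), (- b), (- c).
  by rewrite mulrN h !mulrNz; ring.
have Zsum (n : nat) (F : 'I_n -> R) : (forall i, inZ (F i)) -> inZ (\sum_(i < n) F i).
  by move=> HF; apply: (big_ind inZ); [exact: Z0|exact: ZD|move=> i _; exact: HF].
have sP : size P = m.+1 by rewrite /m prednK // size_poly_gt0 monic_neq0.
have lc : P`_m = 1 by move/monicP: Pm; rewrite lead_coefE sP.
have xm : x ^+ m = - \sum_(i < m) (P`_i)%:~R * x ^+ i.
  move: Pr; rewrite /root horner_coef size_map_inj_poly; last 2 first.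
  - exact: intr_inj.
  - by [].
  rewrite sP big_ord_recr /= coef_map /= lc mul1r addrC addr_eq0 => /eqP ->.
  by congr (- _); apply: eq_bigr => i _; rewrite coef_map.
have Zall k : inZ (x ^+ k).
  elim/ltn_ind: k => k IH.
  case: (ltnP k m) => [km|mk]; first exact: Zsmall.
  have -> : x ^+ k = - \sum_(i < m) (P`_i)%:~R * x ^+ (k - m + i).
    rewrite -{1}(subnK mk) exprD xm mulrN mulr_sumr; congr (- _).
    by apply: eq_bigr => i _; rewrite mulrCA -exprD.
  apply: ZN; apply: Zsum => i; apply: ZM; apply: IH.
  by have := ltn_ord i; lia.
apply: (@rat_int_pow _ (D ^ 3)%N); first by rewrite expn_gt0 D0.
move=> k; have [a [b [c h]]] := Zall k.
have E : ((D%:R * (tpow t k).1.1, D%:R * (tpow t k).1.2, D%:R * (tpow t k).2) : trip)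
    = (a%:~R, b%:~R, c%:~R).
  apply: rev_inj; rewrite /rev /= !rmorphM !rmorph_nat !rmorph_int -h xt -rev_pow /rev; ring.
exists (Nt p q a b c).
rewrite -Nr_pow natrX /Nr -Nt_scale.
have := congr1 (fun t : trip => Nt (p%:~R : rat) q%:~R t.1.1 t.1.2 t.2) E => /= ->.
by rewrite (Nt_morph (intr : {rmorphism int -> rat})).
Qed.
End Alg.

Lemma abs_lt_sqr (R : rcfType) (x y : R) : 0 < y -> x ^+ 2 < y ^+ 2 -> `|x| < y.
Proof.
move=> y0 h; rewrite -(sqrtr_sqr x) -(gtr0_norm y0) -(sqrtr_sqr y).
by rewrite ltr_sqrt // exprn_gt0.
Qed.

Lemma sq_le (R : rcfType) (x y : R) : 0 <= x -> x <= y -> x ^+ 2 <= y ^+ 2.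
Proof.
move=> x0 xy; rewrite -subr_ge0.
have -> : y ^+ 2 - x ^+ 2 = (y - x) * (y + x) by ring.
by rewrite mulr_ge0 ?subr_ge0 // addr_ge0 // (le_trans x0 xy).
Qed.

Lemma ineqs (R : rcfType) (th u v D e : R) : 0 < D -> th != 0 -> th ^+ 2 != D -> u != 0 ->
  0 < e -> e * (u ^+ 2 + D * v ^+ 2) = 1 ->
  let s := Num.sqrt e in let w := Num.sqrt D in
  let C := Num.max (Num.sqrt 2) (Num.sqrt 2 * `|th| / w) in
  [/\ `|u - th * v| < C / s, `|u + th * v| < C / s,
      `|2 * th * v| < 2 * `|th| / w * (1 / s),
      2 * `|th| / w * (1 / s) <= Num.sqrt 2 * C / s
    & `|u + 3 * th * v| < (1 + Num.sqrt 2) * C / s].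
Proof.
move=> D0 th0 thD u0 e0 hE s w C.
have s0 : 0 < s by rewrite sqrtr_gt0.
have w0 : 0 < w by rewrite sqrtr_gt0.
have ss : s ^+ 2 = e by rewrite sqr_sqrtr // ltW.
have ww : w ^+ 2 = D by rewrite sqr_sqrtr // ltW.
have r0 : 0 < Num.sqrt 2 :> R by rewrite sqrtr_gt0.
have rr : Num.sqrt 2 ^+ 2 = 2 :> R by rewrite sqr_sqrtr.
set k := th / w.
set V := w * v.
have thk : th = k * w by rewrite /k divfK // gt_eqF.
have hE' : u ^+ 2 + V ^+ 2 = 1 / s ^+ 2.
  have hE2 : e * (u ^+ 2 + V ^+ 2) = 1 by rewrite /V exprMn ww.
  rewrite ss; apply: (mulfI (lt0r_neq0 e0)); by rewrite hE2 mul1r divff // gt_eqF.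
have k0 : 0 < k ^+ 2 by rewrite exprn_even_gt0 //= /k mulf_neq0 // invr_eq0 gt_eqF.
have k1 : k ^+ 2 != 1.
  by apply: contra thD => /eqP h; rewrite thk exprMn h mul1r ww.
have Cpos : 0 < C by rewrite lt_max r0.
have c1 : Num.sqrt 2 <= C by rewrite le_max lexx.
have c2 : Num.sqrt 2 * `|th| / w <= C by rewrite le_max lexx orbT.
have CC : 1 + k ^+ 2 < C ^+ 2.
  have e2 : (Num.sqrt 2 * `|th| / w) ^+ 2 = 2 * k ^+ 2.
    by rewrite /k !exprMn rr real_normK ?num_real // exprVn; ring.
  have a0 : 0 <= Num.sqrt 2 * `|th| / w by rewrite divr_ge0 ?mulr_ge0 ?sqrtr_ge0 ?normr_ge0 ?ltW.
  have C1 : 2 <= C ^+ 2 by rewrite -rr; apply: sq_le => //; rewrite ltW.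
  have C2 : 2 * k ^+ 2 <= C ^+ 2 by rewrite -e2; apply: sq_le.
  have [kl|kg|ke] := ltgtP (k ^+ 2) 1.
  - apply: (lt_le_trans _ C1); have -> : (2:R) = 1 + 1 by ring.
    by rewrite ltrD2l.
  - apply: (lt_le_trans _ C2); have -> : 2 * k ^+ 2 = k ^+ 2 + k ^+ 2 by ring.
    by rewrite ltrD2r.
  - by move: k1; rewrite ke eqxx.
have E0 : 0 < u ^+ 2 + V ^+ 2.
  by rewrite ltr_wpDr ?sqr_ge0 // exprn_even_gt0.
have u2 : 0 < u ^+ 2 by rewrite exprn_even_gt0.
have Cs : 0 < C / s by rewrite divr_gt0.
have Cs2 : (C / s) ^+ 2 = C ^+ 2 * (u ^+ 2 + V ^+ 2) by rewrite hE'; field; rewrite gt_eqF.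
have P1 : 0 < (C ^+ 2 - (1 + k ^+ 2)) * (u ^+ 2 + V ^+ 2) by rewrite mulr_gt0 // subr_gt0.
have B1 : `|u - th * v| < C / s.
  apply: abs_lt_sqr => //; rewrite Cs2.
  have -> : u - th * v = u - k * V by rewrite thk /V; ring.
  rewrite -subr_gt0.
  have -> : C ^+ 2 * (u ^+ 2 + V ^+ 2) - (u - k * V) ^+ 2 =
    (C ^+ 2 - (1 + k ^+ 2)) * (u ^+ 2 + V ^+ 2) + (k * u + V) ^+ 2 by ring.
  by apply: (lt_le_trans P1); rewrite lerDl sqr_ge0.
have B2 : `|u + th * v| < C / s.
  apply: abs_lt_sqr => //; rewrite Cs2.
  have -> : u + th * v = u + k * V by rewrite thk /V; ring.
  rewrite -subr_gt0.
  have -> : C ^+ 2 * (u ^+ 2 + V ^+ 2) - (u + k * V) ^+ 2 =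
    (C ^+ 2 - (1 + k ^+ 2)) * (u ^+ 2 + V ^+ 2) + (k * u - V) ^+ 2 by ring.
  by apply: (lt_le_trans P1); rewrite lerDl sqr_ge0.
have nk : `|th| / w = `|k|.
  by rewrite /k normrM normrV ?unitfE ?gt_eqF // (gtr0_norm w0).
have kk : `|k| ^+ 2 = k ^+ 2 by rewrite real_normK ?num_real.
have ak : 0 < `|k| by rewrite normr_gt0 -sqrf_eq0 gt_eqF.
have B3 : `|2 * th * v| < 2 * `|th| / w * (1 / s).
  have -> : 2 * `|th| / w * (1 / s) = 2 * `|k| * (1 / s) by rewrite -nk; ring.
  apply: abs_lt_sqr; first by rewrite mulr_gt0 ?mulr_gt0 ?divr_gt0 ?ltr0n ?ltr01 ?invr_gt0.
  have -> : 2 * th * v = 2 * k * V by rewrite thk /V; ring.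
  have -> : (2 * `|k| * (1 / s)) ^+ 2 = 4 * k ^+ 2 * (u ^+ 2 + V ^+ 2).
    by rewrite hE' exprMn exprMn kk; field; rewrite gt_eqF.
  rewrite -subr_gt0.
  have -> : 4 * k ^+ 2 * (u ^+ 2 + V ^+ 2) - (2 * k * V) ^+ 2 = 4 * (k ^+ 2 * u ^+ 2) by ring.
  by apply: mulr_gt0; last exact: mulr_gt0 k0 u2.
have B4 : 2 * `|th| / w * (1 / s) <= Num.sqrt 2 * C / s.
  rewrite mul1r ?mulrA ler_pM2r ?invr_gt0 //.
  have h := ler_wpM2l (ltW r0) c2.
  by rewrite !mulrA -expr2 rr in h.
split => //.
have -> : u + 3 * th * v = (u + th * v) + 2 * th * v by ring.
apply: (le_lt_trans (ler_normD _ _)).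
have -> : (1 + Num.sqrt 2) * C / s = C / s + Num.sqrt 2 * C / s by ring.
apply: ltr_leD => //; exact: le_trans (ltW B3) B4.
Qed.

Theorem mainTheorem7 (R : rcfType) (p q : int) (theta : R) (d : nat)
    (lambda : R) (a b c : nat -> rat)
    (Hirr : irreducible_poly (cubicQ p q))
    (Hroot : forall x : R, root (map_poly ratr (cubicQ p q)) x <-> x = theta)
    (Hd : (0 < d)%N)
    (HOK : forall x : R, inOK theta x ->
       exists u v w : int, d%:R * x = u%:~R + v%:~R * theta + w%:~R * theta ^+ 2)
    (Hunit : unitOK theta lambda) (Hlam : 1 < lambda)
    (Habc : forall n : nat, (0 < n)%N ->
       lambda ^+ n = ratr (a n) + ratr (b n) * theta + ratr (c n) * theta ^+ 2) :
  forall n : nat, (0 < n)%N ->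
    let s := Num.sqrt (lambda ^+ n) in
    [/\ `|Xn p theta (a n) (b n) (c n)| < C1 p theta / s,
        `|Yn p theta (a n) (b n) (c n)| < C1 p theta / s,
        `|Zn theta (b n) (c n)|
           < 2 * `|theta| / Num.sqrt (3 * theta ^+ 2 - 4 * p%:~R) * (1 / s),
        2 * `|theta| / Num.sqrt (3 * theta ^+ 2 - 4 * p%:~R) * (1 / s)
           <= Num.sqrt 2 * C1 p theta / s
      & `|lambda ^+ n - (3 * theta ^+ 2 - p%:~R) * ratr (c n)|
           < (1 + Num.sqrt 2) * C1 p theta / s].
Proof.
move=> n n0 s.
have thr : root (map_poly ratr (cubicQ p q)) theta by apply/Hroot.
have rootE (x : R) : root (map_poly ratr (cubicQ p q)) x = (x ^+ 3 - p%:~R * x - q%:~R == 0).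
  rewrite /root /cubicQ !rmorphB /= map_polyXn map_polyZ map_polyX map_polyC !hornerE !rmorph_int.
  by congr (_ - _ == 0); exact: ratr_int.
have Hq : theta ^+ 3 = p%:~R * theta + q%:~R.
  by move: thr; rewrite rootE => /eqP h; rewrite -[LHS]subr0 -h; ring.
have HLI := @LIlem R p q theta Hirr thr.
have revI := rev_inj HLI.
have rmul := rev_mul Hq.
have rpow := rev_pow Hq.
have NM1 := NMr Hq.
have th0 : theta != 0.
  apply/eqP => t0; have [] := HLI 0 1 0.
    by rewrite t0 rmorph0 rmorph1 expr0n /= !mulr0 !addr0.
  by move=> _ /eqP; rewrite oner_eq0.
have Dpos : 0 < DR p theta.
  rewrite ltNge; apply/negP => Dle.
  set z := Num.sqrt (- DR p theta).
  have ez : z ^+ 2 = - DR p theta by rewrite sqr_sqrtr // oppr_ge0.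
  set r := (- theta + z) / 2.
  have hr : r ^+ 2 + theta * r + theta ^+ 2 - p%:~R = 0.
    have -> : r ^+ 2 + theta * r + theta ^+ 2 - p%:~R = (z ^+ 2 + DR p theta) / 4.
      by rewrite /r /DR /DD; field; rewrite ?pnatr_eq0.
    by rewrite ez addNr mul0r.
  have rc : root (map_poly ratr (cubicQ p q)) r.
    rewrite rootE.
    have -> : r ^+ 3 - p%:~R * r - q%:~R = (r - theta) * (r ^+ 2 + theta * r + theta ^+ 2 - p%:~R).
      by rewrite (qE Hq); ring.
    by rewrite hr mulr0.
  have rt := (Hroot r).1 rc.
  have [] := HLI (- p%:~R) 0 3.
    move: hr; rewrite rt rmorphN rmorph0 rmorph_int rmorph_nat => hr.
    by rewrite -[RHS]hr; ring.
  by move=> _ _ /eqP.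
have thD : theta ^+ 2 != DR p theta.
  apply/eqP => e; have [] := HLI (- (4 * p%:~R)) 0 2.
    move: e; rewrite /DR /DD rmorphN rmorphM rmorph0 rmorph_int !rmorph_nat => e.
    have -> : - (4 * p%:~R) + 0 * theta + 2 * theta ^+ 2 = (3 * theta ^+ 2 - 4 * p%:~R) - theta ^+ 2 by ring.
    by rewrite -e subrr.
  by move=> _ _ /eqP.
pose tm (m : nat) : trip := (a m, b m, c m).
have htm m : (0 < m)%N -> lambda ^+ m = rev theta (tm m) by move=> m0; rewrite Habc.
have hl1 : lambda = rev theta (tm 1%N) by rewrite -htm ?expr1.
have lam0 : 0 < lambda by rewrite (lt_trans ltr01 Hlam).
have [z1 hz1] := int_norm Hq HLI Hunit.1.2 hl1.
have [t' ht'] := inK_trip Hq Hunit.2.1.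
have [z2 hz2] := int_norm Hq HLI Hunit.2.2 ht'.
have m1 : mul p q (tm 1%N) t' = (1, 0, 0).
  apply: revI; rewrite rmul -hl1 -ht' divff ?gt_eqF // /rev /= rmorph1 !rmorph0; ring.
have zz : z1 * z2 = 1.
  apply: (@intr_inj rat); rewrite intrM -hz1 -hz2 -Nr_mul m1 /Nr /= Nt_one.
  by rewrite rmorph1.
have pos1 : 0 <= ratr (Nr p q (tm 1%N)) :> R.
  rewrite -NM1 -hl1; apply: mulr_ge0; first exact: ltW.
  by apply: addr_ge0; [exact: sqr_ge0 | apply: mulr_ge0; [exact: ltW | exact: sqr_ge0]].
have N1 : Nr p q (tm 1%N) = 1.
  rewrite hz1.
  have z1pos : 0 <= z1 by move: pos1; rewrite hz1 ratr_int ler0z.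
  have := congr1 absz zz; rewrite abszM /= => /eqP; rewrite muln_eq1 => /andP [/eqP h _].
  have z1e : z1 = 1 by move: z1pos h; case: (z1) => // k _ /= ->.
  by rewrite z1e.
have normm m : (0 < m)%N ->
    lambda ^+ m * (U p theta (tm m) ^+ 2 + DR p theta * V theta (tm m) ^+ 2) = 1.
  move=> m0.
  have E : tm m = tpow p q (tm 1%N) m by apply: revI; rewrite rpow -hl1 -htm.
  by rewrite htm // NM1 E Nr_pow N1 expr1n rmorph1.
have nn0 : (0 < n + n)%N by rewrite addn_gt0 n0.
have u0 : U p theta (tm n) != 0.
  apply/eqP => u0.
  have E2 : tm (n + n)%N = mul p q (tm n) (tm n).
    by apply: revI; rewrite rmul -!htm // exprD.
  have v2 : V theta (tm (n + n)%N) = 0 by rewrite E2 (V_mul Hq) u0; ring.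
  have [_ hb hc] : [/\ (0:rat) = 0, b (n + n)%N = 0 & - c (n + n)%N = 0].
    apply: HLI; rewrite rmorph0 rmorphN.
    move: v2; rewrite /V /vv /= => v2.
    have -> : 0 + ratr (b (n + n)%N) * theta + - ratr (c (n + n)%N) * theta ^+ 2
      = 2 * theta * ((ratr (b (n + n)%N) - ratr (c (n + n)%N) * theta) / 2).
      by field; rewrite ?pnatr_eq0.
    by rewrite v2 mulr0.
  have hc' : c (n + n)%N = 0 by rewrite -[c _]opprK hc oppr0.
  set x := lambda ^+ (n + n).
  have hx : x = ratr (a (n + n)%N).
    by rewrite /x htm // /rev /= hb hc' !rmorph0; ring.
  have Ua : U p theta (tm (n + n)%N) = x.
    by rewrite hx /U /uu /= hb hc' !rmorph0; ring.
  have := normm _ nn0; rewrite -/x v2 Ua expr0n /= mulr0 addr0.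
  have x1 : 1 < x ^+ 3 by rewrite exprn_egt1 // /x exprn_egt1 // addn_eq0 negb_and -lt0n n0.
  by rewrite -exprS => e; move: x1; rewrite e ltxx.
have hn := normm n n0.
have [B1 B2 B3 B4 B5] := ineqs Dpos th0 thD u0 (exprn_gt0 n lam0) hn.
have eX : Xn p theta (a n) (b n) (c n) = U p theta (tm n) - theta * V theta (tm n).
  by rewrite /Xn /U /V /uu /vv /=; field; rewrite ?pnatr_eq0.
have eY : Yn p theta (a n) (b n) (c n) = U p theta (tm n) + theta * V theta (tm n).
  by rewrite /Yn /U /V /uu /vv /=; field; rewrite ?pnatr_eq0.
have eZ : Zn theta (b n) (c n) = 2 * theta * V theta (tm n).
  by rewrite /Zn /V /vv /=; field; rewrite ?pnatr_eq0.
have eL : lambda ^+ n - (3 * theta ^+ 2 - p%:~R) * ratr (c n)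
    = U p theta (tm n) + 3 * theta * V theta (tm n).
  by rewrite htm // /rev /U /V /uu /vv /=; field; rewrite ?pnatr_eq0.
rewrite /s eX eY eZ eL.
by split.
Qed.
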